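(* Let $N\ge2$ be an integer and let $\sigma$ be a finite nonempty set of functions $\mathbb{Z}_2\to\mathbb{Z}_N$ that is totally indistinguishable. Then the standard oracle operators $\{U_f: f\in\sigma\}$ are not unambiguously distinguishable.
   Context: A set $\sigma$ of functions $\mathbb{Z}_M\to\mathbb{Z}_N$ is totally indistinguishable if for every $x\in\mathbb{Z}_M$ and every $f\in\sigma$ there exists $f'\in\sigma$ with $f'\neq f$ and $f'(x)=f(x)$. Let $\mathcal{H}_2,\mathcal{H}_N$ be Hilbert spaces with orthonormal bases $\{|x\rangle\}_{x\in\mathbb{Z}_2}$, $\{|y\rangle\}_{y\in\mathbb{Z}_N}$. For $f:\mathbb{Z}_2\to\mathbb{Z}_N$ the standard oracle operator is the unitary $U_f$ on $\mathcal{H}_2\otimes\mathcal{H}_N$ with $U_f|x\rangle\otimes|y\rangle=|x\rangle\otimes|y\oplus f(x)\rangle$, $\oplus$ being addition mod $N$. A finite list of unitary operators $W_1,\ldots,W_K$ on a finite-dimensional Hilbert space $\mathcal{H}$ is called unambiguously distinguishable if there exist a finite-dimensional ancilla space $\mathcal{H}_A$ and a unit vector $|\psi\rangle\in\mathcal{H}\otimes\mathcal{H}_A$ such that the vectors $(W_j\otimes\mathbb{1}_A)|\psi\rangle$ are linearly independent. *)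

(* Defs.v *)
From HB Require Import structures.
From mathcomp Require Import all_boot all_order all_algebra.
From mathcomp Require Import mxtens.
Set Implicit Arguments. Unset Strict Implicit. Unset Printing Implicit Defensive.
Import Order.TTheory GRing.Theory Num.Theory.
Local Open Scope ring_scope.

Lemma addmod_proof (N : nat) (y v : 'I_N) : ((y + v) %% N < N)%N.
Proof. by rewrite ltn_pmod // (leq_ltn_trans (leq0n y) (ltn_ord y)). Qed.

Definition addmod (N : nat) (y v : 'I_N) : 'I_N := Ordinal (addmod_proof y v).

Definition totally_indist (M N : nat) (s : {set {ffun 'I_M -> 'I_N}}) : Prop :=
  forall (x : 'I_M) (f : {ffun 'I_M -> 'I_N}), f \in s ->
    exists2 f' : {ffun 'I_M -> 'I_N}, f' \in s & f' != f /\ f' x = f x.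

(* Standard oracle U_f on H_2 (x) H_N, in the basis |x> (x) |y> indexed by
   mxtens_index (x, y) : 'I_(2 * N).  Column |x,y> is mapped to |x, y (+) f x>. *)
Definition oracle (C : numClosedFieldType) (N : nat) (f : {ffun 'I_2 -> 'I_N})
  : 'M[C]_(2 * N) :=
  \matrix_(i, j) (i == mxtens_index ((mxtens_unindex j).1,
                        addmod (mxtens_unindex j).2 (f (mxtens_unindex j).1)))%:R.

Definition unit_vector (C : numClosedFieldType) (n : nat) (v : 'cV[C]_n) : Prop :=
  \sum_(i < n) `|v i 0| ^+ 2 = 1.

Definition lin_indep_on (C : numClosedFieldType) (T : finType) (n : nat)
  (S : {set T}) (v : T -> 'cV[C]_n) : Prop :=
  forall c : T -> C, \sum_(t in S) c t *: v t = 0 -> forall t, t \in S -> c t = 0.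

(* The operators (W t)_{t in S} on H = C^n are unambiguously distinguishable:
   there is a finite-dimensional ancilla C^d and a unit vector psi in
   H (x) C^d such that the vectors (W t (x) 1) psi are linearly independent. *)
Definition unamb_dist (C : numClosedFieldType) (T : finType) (n : nat)
  (S : {set T}) (W : T -> 'M[C]_n) : Prop :=
  exists (d : nat) (psi : 'cV[C]_(n * d)),
    unit_vector psi /\
    lin_indep_on S (fun t => (W t *t (1%:M : 'M[C]_d)) *m psi).

(* Main.v *)
Require Import Defs.
From HB Require Import structures.
From mathcomp Require Import all_boot all_order all_algebra.
From mathcomp Require Import mxtens zify.
Set Implicit Arguments. Unset Strict Implicit. Unset Printing Implicit Defensive.
Import Order.TTheory GRing.Theory Num.Theory.
Local Open Scope ring_scope.

Lemma tensmxDl (R : pzRingType) m n p q (A B : 'M[R]_(m, n)) (D : 'M[R]_(p, q)) :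
  (A + B) *t D = A *t D + B *t D.
Proof. by apply/matrixP => i j; rewrite !mxE mulrDl. Qed.

Lemma rank_sumsmx (F : fieldType) (I : finType) (P : pred I) n (A_ : I -> 'rV[F]_n) :
  (\rank (\sum_(i | P i) <<A_ i>>)%MS <= #|P|)%N.
Proof.
rewrite -sum1_card.
apply: (big_ind2 (fun (X : 'M[F]_n) (m : nat) => \rank X <= m)%N).
- by rewrite mxrank0.
- move=> x1 x2 y1 y2 h1 h2; case: (mxrank_adds_leqif x1 y1) => h _.
  exact: leq_trans h (leq_add h1 h2).
- by move=> i _; rewrite genmxE rank_leq_row.
Qed.

Lemma count_img (N : nat) (sigma : {set {ffun 'I_2 -> 'I_N}})
  (hti : totally_indist sigma) (x : 'I_2) :
  (2 * #|[set f x | f : {ffun 'I_2 -> 'I_N} in sigma]| <= #|sigma|)%N.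
Proof.
rewrite -[#|sigma|]sum1_card (partition_big_imset (fun f : {ffun 'I_2 -> 'I_N} => f x)) /=.
rewrite mulnC -sum_nat_const; apply: leq_sum => a /imsetP [f hf ->].
have [f' hf' [hne hx]] := hti x f hf.
rewrite sum1_card.
apply: leq_trans (_ : #|[set f; f']| <= _)%N; first by rewrite cards2 eq_sym hne.
apply: subset_leq_card; apply/subsetP => g; rewrite !inE => /orP [] /eqP -> /=.
  by rewrite unfold_in /= hf eqxx.
by rewrite unfold_in /= hf' hx eqxx.
Qed.

Definition Lmx (C : numClosedFieldType) (N : nat) (a : 'I_N) : 'M[C]_(2 * N) :=
  \matrix_(i, j) (((mxtens_unindex j).1 == 0) &&
     (i == mxtens_index ((mxtens_unindex j).1, addmod (mxtens_unindex j).2 a)))%:R.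
Definition Rmx (C : numClosedFieldType) (N : nat) (a : 'I_N) : 'M[C]_(2 * N) :=
  \matrix_(i, j) (((mxtens_unindex j).1 == 1) &&
     (i == mxtens_index ((mxtens_unindex j).1, addmod (mxtens_unindex j).2 a)))%:R.

Lemma oracle_split (C : numClosedFieldType) (N : nat) (f : {ffun 'I_2 -> 'I_N}) :
  oracle C f = Lmx C (f 0) + Rmx C (f 1).
Proof.
apply/matrixP => i j; rewrite !mxE; case: (mxtens_unindex j) => x y /=.
have [->|->] : x = 0 \/ x = 1.
  by case: x => [[|[|]]] // ?; [left|right]; apply: val_inj.
- by rewrite eqxx andTb andFb addr0.
- by rewrite eqxx andTb andFb add0r.
Qed.

Theorem theorem5 (C : numClosedFieldType) (N : nat) (hN : (2 <= N)%N)
  (sigma : {set {ffun 'I_2 -> 'I_N}}) (hne : sigma != set0)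
  (hti : totally_indist sigma) :
  ~ unamb_dist sigma (fun f => oracle C f).
Proof.
move=> [d [psi [_ hli]]].
set l := fun a : 'I_N => (Lmx C a *t (1%:M : 'M[C]_d)) *m psi.
set r := fun a : 'I_N => (Rmx C a *t (1%:M : 'M[C]_d)) *m psi.
set y := fun f : {ffun 'I_2 -> 'I_N} => (oracle C f *t (1%:M : 'M[C]_d)) *m psi.
have hy f : y f = l (f 0) + r (f 1) by rewrite /y oracle_split tensmxDl mulmxDl.
case/set0Pn: hne => f0 hf0.
set a0 := f0 0.
set A := [set f 0 | f : {ffun 'I_2 -> 'I_N} in sigma].
set B := [set f 1 | f : {ffun 'I_2 -> 'I_N} in sigma].
set U := ((\sum_(a | a \in A :\ a0) <<(l a - l a0)^T>>) +
          (\sum_(b | b \in B) <<(l a0 + r b)^T>>))%MS.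
have rU : (\rank U <= #|A :\ a0| + #|B|)%N.
  case: (mxrank_adds_leqif (\sum_(a | a \in A :\ a0) <<(l a - l a0)^T>>)%MS
                           (\sum_(b | b \in B) <<(l a0 + r b)^T>>)%MS) => h _.
  apply: leq_trans h _; apply: leq_add; exact: rank_sumsmx.
set k := #|sigma|.
set Y := \matrix_(i < k) (y (enum_val i))^T.
have YU : (Y <= U)%MS.
  apply/row_subP => i; rewrite rowK.
  have hf : enum_val i \in sigma := enum_valP i.
  set f := enum_val i in hf *.
  have -> : y f = (l (f 0) - l a0) + (l a0 + r (f 1)) by rewrite hy addrA subrK.
  rewrite linearD /=; apply: addmx_sub_adds.
    have [e|ne] := eqVneq (f 0) a0.
      by rewrite e subrr trmx0 sub0mx.
    apply: (sumsmx_sup (f 0)); first by rewrite !inE ne /=; apply: imset_f.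
    by rewrite genmxE.
  apply: (sumsmx_sup (f 1)); first by apply: imset_f.
  by rewrite genmxE.
have rY : (\rank Y < k)%N.
  apply: leq_ltn_trans (mxrankS YU) _; apply: leq_ltn_trans rU _.
  have c0 := count_img hti 0; have c1 := count_img hti 1.
  have hA : a0 \in A by apply: imset_f.
  move: c0 c1; rewrite (cardsD1 a0 A) hA -/A -/B -/k => c0 c1.
  rewrite /nat_of_bool in c0; lia.
set K := kermx Y.
have K0 : K != 0 by rewrite -mxrank_eq0 mxrank_ker subn_eq0 -ltnNge.
have hK i : row i K *m Y = 0 by apply/eqP; rewrite -sub_kermx row_sub.
clearbody K.
have [i [j hij]] : exists i j, K i j != 0.
  case: (boolP [exists i, exists j, K i j != 0]) => [/existsP [i /existsP [j h]]|h].
    by exists i, j.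
  move: K0; case/negP; apply/eqP/matrixP => i j; rewrite mxE.
  apply/eqP; apply: contraNT h => h'; apply/existsP; exists i; apply/existsP; exists j; exact h'.
set cv := row i K.
have hc : cv *m Y = 0 := hK i.
pose c := fun t => K i (enum_rank_in hf0 t).
have sum0 : \sum_(t in sigma) c t *: y t = 0.
  rewrite big_enum_val /=; apply: trmx_inj; rewrite trmx0 -hc mulmx_sum_row linear_sum /=.
  apply: eq_bigr => m _; rewrite /c enum_valK_in linearZ /= rowK mxE.
  done.
have := hli c sum0 (enum_val j) (enum_valP j).
by rewrite /c enum_valK_in; apply/eqP.
Qed.
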